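(* Let $X=(X_1,\dots,X_d)$ be a random vector with values in $\{0,1\}^d$ such that $\mathbb{P}(X=x)>0$ for every $x\in\{0,1\}^d$, and let $G:\{0,1\}^d\to\mathbb{R}$. Let $X^{(1)},\dots,X^{(n)}$ be i.i.d. copies of $X$. Define $\boldsymbol g(x):=(e_A(x_A)G(x))_{A\subseteq D}\in\mathbb{R}^{2^d}$, $\boldsymbol\mu:=\mathbb{E}[\boldsymbol g(X)]$, $\widehat{\boldsymbol\mu}_n:=\frac1n\sum_{i=1}^n\boldsymbol g(X^{(i)})$, $\Gamma_{A,B}:=\mathbb{E}[e_A(X_A)e_B(X_B)]$, $\widehat{\boldsymbol\beta}_n:=\Gamma^{-1}\widehat{\boldsymbol\mu}_n$, $\boldsymbol e(x):=(e_A(x_A))_{A\subseteq D}$ and $\widehat G_n(x):=\widehat{\boldsymbol\beta}_n^{\top}\boldsymbol e(x)$. Let $\|\boldsymbol g-\boldsymbol\mu\|_\infty:=\sup_{x\in\{0,1\}^d}\|\boldsymbol g(x)-\boldsymbol\mu\|_2$ and let $\lambda_{\min}(\Gamma)$ be the smallest eigenvalue of $\Gamma$. Then for every $x\in\{0,1\}^d$ and every $\varepsilon$ with $0\le\varepsilon\le\dfrac{\|\boldsymbol g-\boldsymbol\mu\|_\infty\|\boldsymbol e(x)\|_2}{\lambda_{\min}(\Gamma)}$, $$\mathbb{P}\left(|\widehat G_n(x)-G(x)|>\varepsilon\right)\le\exp\left(-\frac n8\left(\frac{\varepsilon\,\lambda_{\min}(\Gamma)}{\|\boldsymbol g-\boldsymbol\mu\|_\infty\|\boldsymbol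 e(x)\|_2}\right)^2+\frac14\right).$$
   Context: $D=\{1,\dots,d\}$; for $A\subseteq D$, $x_A:=(x_i)_{i\in A}$, $\mathbf{P}_A(x_A):=\mathbb{P}(X_A=x_A)$, and $e_A(x_A):=\dfrac{(-1)^{\sum_{j\in A}x_j}}{\mathbf{P}_A(x_A)}$ with $e_\emptyset\equiv1$. The matrix $\Gamma=(\Gamma_{A,B})_{A,B\subseteq D}$ is symmetric positive definite. *)

(* Defs.v *)
From HB Require Import structures.
From mathcomp Require Import all_boot all_order all_algebra.
From mathcomp Require Import reals.
From mathcomp.analysis Require Import sequences exp.
Set Implicit Arguments. Unset Strict Implicit. Unset Printing Implicit Defensive.
Import Order.TTheory GRing.Theory Num.Theory.
Local Open Scope ring_scope.

Section Defs.
Variables (R : realType) (d : nat).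

(* points of {0,1}^d : x_i = true stands for 1 *)
Definition state := {ffun 'I_d -> bool}.
(* index set for the vectors (e_A)_{A subset D} : the subsets of D *)
Definition NS := #|{set 'I_d}|.
Definition subset_of (k : 'I_NS) : {set 'I_d} := enum_val k.

Definition is_law (p : state -> R) := (forall x, 0 < p x) /\ \sum_x p x = 1.

Definition PA (p : state -> R) (A : {set 'I_d}) (x : state) : R :=
  \sum_(y : state | [forall i in A, y i == x i]) p y.

Definition eA (p : state -> R) (A : {set 'I_d}) (x : state) : R :=
  (-1) ^+ #|[set j in A | x j]| / PA p A x.

Definition evec (p : state -> R) (x : state) : 'cV[R]_NS :=
  \col_k eA p (subset_of k) x.

Definition gvec (p : state -> R) (G : state -> R) (x : state) : 'cV[R]_NS :=
  \col_k (eA p (subset_of k) x * G x).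

Definition muvec p G : 'cV[R]_NS := \sum_x p x *: gvec p G x.

Definition Gamma p : 'M[R]_NS :=
  \matrix_(k, l) \sum_x p x * (eA p (subset_of k) x * eA p (subset_of l) x).

Definition sample n := {ffun 'I_n -> state}.

Definition muhat p G n (s : sample n) : 'cV[R]_NS :=
  (n%:R)^-1 *: \sum_i gvec p G (s i).

Definition betahat p G n (s : sample n) : 'cV[R]_NS :=
  invmx (Gamma p) *m muhat p G s.

Definition Ghat p G n (s : sample n) (x : state) : R :=
  ((betahat p G s)^T *m evec p x) 0 0.

Definition norm2 (v : 'cV[R]_NS) : R := Num.sqrt (\sum_k v k 0 ^+ 2).

Definition gsup p G : R := \big[Num.max/0]_x norm2 (gvec p G x - muvec p G).

Definition is_lambda_min (M : 'M[R]_NS) (lam : R) :=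
  eigenvalue M lam /\ forall b, eigenvalue M b -> lam <= b.

Definition Pn (p : state -> R) n (E : pred (sample n)) : R :=
  \sum_(s : sample n | E s) \prod_i p (s i).

End Defs.

(* Main.v *)
Require Import Defs.
Set Warnings "-notation-overridden,-ambiguous-paths".
From HB Require Import structures.
From mathcomp Require Import all_boot all_order all_algebra.
From mathcomp Require Import reals.
From mathcomp.analysis Require Import sequences exp.
From mathcomp Require Import complex spectral sesquilinear.
From mathcomp Require Import lra ring.
Set Implicit Arguments. Unset Strict Implicit. Unset Printing Implicit Defensive.
Import Order.TTheory GRing.Theory Num.Theory.
Local Open Scope ring_scope.
Section Spec.
Variable R : realType.
Local Notation C := (R[i]).
Local Open Scope sesquilinear_scope.
Local Notation toC := (real_complex R).

Definition sqc n (y : 'cV[C]_n) : C := \sum_k `|y k 0| ^+ 2.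

Lemma sqcE n (y : 'cV[C]_n) : sqc y = ((map_mx Num.Def.conjC y^T) *m y) 0 0.
Proof.
rewrite /sqc !mxE; apply: eq_bigr => k _; rewrite !mxE normCKC //.
Qed.

Lemma sqc_unitary n (P : 'M[C]_n) (y : 'cV[C]_n) :
  P \is unitarymx -> sqc ((map_mx Num.Def.conjC P^T) *m y) = sqc y.
Proof.
move=> /unitarymxP PU; rewrite !sqcE.
rewrite trmx_mul map_mxM trmxCK mulmxA -(mulmxA _ P) PU mulmx1 //.
Qed.

Lemma sqc_real n (v : 'cV[R]_n) : sqc (map_mx toC v) = toC (\sum_k v k 0 ^+ 2).
Proof.
rewrite /sqc rmorph_sum; apply: eq_bigr => k _; rewrite mxE normCK conj_Creal.
  by rewrite rmorphXn.
by apply/complex_realP; eexists.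
Qed.

Lemma spec_bound n (A : 'M[R]_n) (lam : R) :
  A^T = A -> 0 <= lam -> (forall b, eigenvalue A b -> lam <= b) ->
  forall w : 'cV[R]_n, lam ^+ 2 * \sum_k (w k 0) ^+ 2 <= \sum_k ((A *m w) k 0) ^+ 2.
Proof.
move=> Asym lam0 lamP w.
pose Ac := map_mx toC A.
have Aherm : Ac \is hermsymmx.
  apply: realsym_hermsym.
    apply/is_hermitianmxP; rewrite expr0 scale1r; apply/matrixP => i j; rewrite !mxE /=.
    by rewrite -{1}Asym mxE.
  by apply/mxOverP => i j; rewrite mxE; apply/complex_realP; eexists.
have /orthomx_spectralP AE := hermitian_normalmx Aherm.
set P := spectralmx Ac in AE; set X := spectral_diag Ac in AE.
have PU : P \is unitarymx by apply: spectral_unitarymx.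
have Xreal : X \is a realmx by apply: hermitian_spectral_diag_real.
have PPt : P *m map_mx Num.Def.conjC P^T = 1%:M by apply/unitarymxP.
rewrite invmx_unitary // in AE.
have PtP : map_mx Num.Def.conjC P^T *m P = 1%:M.
  by rewrite -invmx_unitary // mulVmx // unitarymx_unit.
have Xge : forall j : 'I_n, toC lam ^+ 2 <= `|X 0 j| ^+ 2.
  move=> j.
  have Xj : X 0 j = toC (complex.Re (X 0 j)).
    by rewrite RRe_real //; apply: (mxOverP Xreal).
  have eAc : eigenvalue Ac (X 0 j).
    apply/eigenvalueP; exists (delta_mx 0 j *m P).
      rewrite AE !mulmxA -(mulmxA _ P) PPt mulmx1.
      have -> : (delta_mx 0 j : 'rV_n) *m diag_mx X = X 0 j *: (delta_mx 0 j : 'rV_n).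
        apply/matrixP => a b; rewrite mul_mx_diag !mxE.
        by case: (eqVneq b j) => [->|nbj]; rewrite ?eqxx ?andbT ?andbF ?mulr0 ?mul0r // mulrC.
      by rewrite -scalemxAl.
    apply/negP => /eqP H.
    have := congr1 (mulmx^~ (map_mx Num.Def.conjC P^T)) H.
    rewrite -mulmxA PPt mulmx1 mul0mx => /matrixP/(_ 0 j).
    by rewrite !mxE !eqxx /= => /eqP; rewrite oner_eq0.
  have : lam <= complex.Re (X 0 j).
    apply: lamP; move: eAc; rewrite /Ac {1}Xj. by rewrite eigenvalue_map.
  move=> le; rewrite Xj normCK conj_Creal; last by apply/complex_realP; eexists.
  rewrite -rmorphM -rmorphXn lecR expr2.
  by apply: ler_pM.
pose wc := map_mx toC w; pose z := P *m wc.
have wcE : wc = map_mx Num.Def.conjC P^T *m z by rewrite /z mulmxA PtP mul1mx.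
have ucE : map_mx toC (A *m w) = map_mx Num.Def.conjC P^T *m (diag_mx X *m z).
  by rewrite map_mxM -/Ac AE -!mulmxA.
rewrite -lecR -sqc_real.
have -> : toC (lam ^+ 2 * \sum_k w k 0 ^+ 2) = toC lam ^+ 2 * sqc wc by rewrite sqc_real rmorphM rmorphXn.
rewrite ucE wcE !sqc_unitary //.
rewrite /sqc mulr_sumr; apply: ler_sum => k _.
have Hd : (diag_mx X *m z) k 0 = X 0 k * z k 0 by rewrite mul_diag_mx mxE.
rewrite Hd normrM exprMn.
by apply: ler_wpM2r; [apply: exprn_ge0 | apply: Xge].
Qed.
End Spec.
Section Reals.
Variable R : realType.

Lemma expR_le_inv (y : R) : y < 1 -> expR y <= (1 - y)^-1.
Proof.
move=> y1; have h : 0 < 1 - y by lra.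
have := expR_ge1Dx (- y); rewrite expRN => H.
rewrite -(invrK (expR y)) lef_pV2 ?posrE ?invr_gt0 ?expR_gt0 //.
Qed.

Lemma expR_quad (y t : R) : `|y| <= t -> t < 1 -> expR y <= 1 + y + y ^+ 2 / (1 - t).
Proof.
move=> yt t1; have yy : y < 1 by move: yt; rewrite ler_norml; lra.
apply: (le_trans (expR_le_inv yy)).
have h1 : 0 < 1 - y by lra.
have h2 : 0 < 1 - t by lra.
have ht : 1 - t <= 1 - y by move: yt; rewrite ler_norml; lra.
have -> : (1 - y)^-1 = 1 + y + y ^+ 2 / (1 - y) by field; lra.
rewrite lerD2l ler_wpM2l ?sqr_ge0 // lef_pV2 ?posrE //.
Qed.

Lemma cheb_num (u : R) : 2 <= u -> u <= 14 -> u^-1 <= expR (- u / 8 + 4^-1).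
Proof.
move=> u2 u14.
pose v := u / 8 - 4^-1.
have v0 : 0 <= v by rewrite /v; lra.
have v3 : v / 3 < 1 by rewrite /v; lra.
have E : expR v <= ((1 - v / 3)^-1) ^+ 3.
  have -> : v = v / 3 * 3%:R by field.
  rewrite expRM_natr.
  have -> : v / 3 * 3%:R / 3 = v / 3 by field.
  rewrite lerXn2r ?nnegrE ?expR_ge0 ?invr_ge0 //; [lra | exact: expR_le_inv].
have -> : - u / 8 + 4^-1 = - v by rewrite /v; field.
have w0 : 0 < (1 - v / 3) ^+ 3 by apply: exprn_gt0; lra.
rewrite expRN lef_pV2 ?posrE ?expR_gt0 //; last by lra.
apply: (le_trans E); rewrite exprVn -(ler_pM2r w0) mulVf; last by rewrite gt_eqF.
have uv : u = 8 * v + 2 by rewrite /v; field.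
rewrite uv; set t := v / 3.
have -> : v = 3 * t by rewrite /t; field.
have t0 : 0 <= t by rewrite /t; lra.
have t1 : t <= 1/2 by rewrite /t /v; lra.
have key : forall s0 b0 : R, 0 <= s0 <= 1 - t -> 0 <= b0 <= 8 * (3 * t) + 2 -> 1 <= b0 * s0 ^+ 3 ->
   1 <= (8 * (3 * t) + 2) * (1 - t) ^+ 3.
  move=> s0 b0 /andP[s00 s0t] /andP[b00 b0t] H; apply: (le_trans H).
  apply: ler_pM => //; first exact: exprn_ge0.
  by rewrite lerXn2r ?nnegrE //; lra.
case: (lerP t (1/10)) => ht1.
  by apply: (key (9/10) 2); rewrite ?expr3; lra.
case: (lerP t (1/4)) => ht2.
  by apply: (key (3/4) (22/5)); rewrite ?expr3; lra.
by apply: (key (1/2) 8); rewrite ?expr3; lra.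
Qed.

Lemma chern_num (u : R) : 14 <= u -> 2 * expR (- u / 6) <= expR (- u / 8 + 4^-1).
Proof.
move=> u14; set x := u / 24 + 4^-1.
have -> : - u / 8 + 4^-1 = - u / 6 + x by rewrite /x; field.
rewrite expRD mulrC ler_pM2l ?expR_gt0 //.
have -> : x = x / 2 * 2%:R by field.
rewrite expRM_natr.
have h := expR_ge1Dx (x / 2).
have hx : 5/6 <= x by rewrite /x; lra.
apply: (@le_trans _ _ ((1 + x / 2) ^+ 2)); first by rewrite expr2; nra.
by rewrite lerXn2r ?nnegrE ?expR_ge0 //; lra.
Qed.
End Reals.
Section Conc.
Variables (R : realType) (T : finType) (n : nat) (p : T -> R).
Hypotheses (p0 : forall z, 0 < p z) (p1 : \sum_z p z = 1).

Lemma prod_exp (h : 'I_n -> T -> R) :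
  \sum_(s : {ffun 'I_n -> T}) \prod_i (p (s i) * h i (s i)) = \prod_i \sum_z p z * h i z.
Proof. by rewrite (bigA_distr_bigA (fun i z => p z * h i z)). Qed.

Lemma total : \sum_(s : {ffun 'I_n -> T}) \prod_i p (s i) = 1.
Proof.
rewrite -(bigA_distr_bigA (fun (i : 'I_n) (z : T) => p z)) /=.
by rewrite big1 // => i _; rewrite p1.
Qed.

Lemma prod_if (F : 'I_n -> R) i : \prod_k (if k == i then F k else 1) = F i.
Proof. by rewrite -big_mkcond big_pred1_eq. Qed.

Lemma second_moment (Y : T -> R) (c : R) :
  \sum_z p z * Y z = 0 -> (forall z, `|Y z| <= c) ->
  \sum_(s : {ffun 'I_n -> T}) \prod_i p (s i) * (\sum_i Y (s i)) ^+ 2 <= n%:R * c ^+ 2.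
Proof.
move=> Y0 Yc.
have E : forall s : {ffun 'I_n -> T}, \prod_i p (s i) * (\sum_i Y (s i)) ^+ 2 =
   \sum_i \sum_j \prod_k (p (s k) * ((if k == i then Y (s k) else 1) * (if k == j then Y (s k) else 1))).
  move=> s; rewrite expr2 mulr_suml mulr_sumr; apply: eq_bigr => i _.
  rewrite mulr_sumr mulr_sumr; apply: eq_bigr => j _.
  rewrite big_split big_split /= !prod_if mulrA //.
under eq_bigr do rewrite E.
rewrite exchange_big /=.
under eq_bigr do rewrite exchange_big /=.
under eq_bigr do under eq_bigr do rewrite (prod_exp (fun k z => (if k == _ then Y z else 1) * (if k == _ then Y z else 1))).
have Ht : forall z, p z * Y z ^+ 2 <= p z * c ^+ 2.
  move=> z; apply: ler_wpM2l; first exact: ltW.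
  have cz : 0 <= c := le_trans (normr_ge0 _) (Yc z).
  by rewrite -real_normK ?num_real // lerXn2r ?nnegrE.
have Hij : forall i j : 'I_n, \prod_k \sum_z p z * ((if k == i then Y z else 1) * (if k == j then Y z else 1))
   = if i == j then \sum_z p z * Y z ^+ 2 else 0.
  move=> i j; rewrite (bigD1 i) //= eqxx.
  case: eqVneq => [<-|nij].
    rewrite [X in _ * X]big1 ?mulr1; first by apply: eq_bigr => z _; rewrite expr2.
    move=> k /negbTE ->; rewrite -[RHS]p1; apply: eq_bigr => z _; by rewrite !mulr1.
  rewrite (eq_bigr (fun z => p z * Y z)); last by move=> z _; rewrite mulr1.
  by rewrite Y0 mul0r.
under eq_bigr do under eq_bigr do rewrite Hij.
have Hs : forall i : 'I_n, \sum_j (if i == j then \sum_z p z * Y z ^+ 2 else 0) = \sum_z p z * Y z ^+ 2.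
  move=> i; rewrite [LHS](bigD1 i) //= eqxx [X in _ + X]big1 ?addr0 //.
  by move=> j; rewrite eq_sym => /negbTE ->.
under eq_bigr do rewrite Hs.
rewrite sumr_const card_ord -[_ *+ n]mulr_natl.
apply: ler_wpM2l; first exact: ler0n.
apply: (@le_trans _ _ (\sum_z p z * c ^+ 2)); first by apply: ler_sum => z _; exact: Ht.
by rewrite -mulr_suml p1 mul1r.
Qed.

Lemma mgf (Y : T -> R) (c s : R) :
  \sum_z p z * Y z = 0 -> (forall z, `|Y z| <= c) -> 0 <= s -> s * c < 1 ->
  \sum_(w : {ffun 'I_n -> T}) \prod_i p (w i) * expR (s * \sum_i Y (w i))
  <= expR (s ^+ 2 * c ^+ 2 / (1 - s * c)) ^+ n.
Proof.
move=> Y0 Yc s0 sc1.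
set K := s ^+ 2 * c ^+ 2 / (1 - s * c).
have E : forall w : {ffun 'I_n -> T}, \prod_i p (w i) * expR (s * \sum_i Y (w i)) =
   \prod_i (p (w i) * expR (s * Y (w i))).
  by move=> w; rewrite mulr_sumr expR_sum big_split.
under eq_bigr do rewrite E.
rewrite (prod_exp (fun i z => expR (s * Y z))).
have -> : expR K ^+ n = \prod_(i < n) expR K by rewrite prodr_const card_ord.
apply: ler_prod => i _.
apply/andP; split.
  by apply: sumr_ge0 => z _; apply: mulr_ge0; [exact: ltW | exact: expR_ge0].
have h1 : 0 < 1 - s * c by lra.
apply: (@le_trans _ _ (\sum_z (p z + s * (p z * Y z) + p z * K))).
  apply: ler_sum => z _.
  have cz : 0 <= c := le_trans (normr_ge0 _) (Yc z).
  have Hn : `|s * Y z| <= s * c by rewrite normrM ger0_norm // ler_wpM2l.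
  have Hq := expR_quad Hn sc1.
  have Hy : (s * Y z) ^+ 2 <= (s * c) ^+ 2.
    by rewrite -real_normK ?num_real // lerXn2r ?nnegrE ?mulr_ge0.
  have HK : (s * Y z) ^+ 2 / (1 - s * c) <= K.
    by rewrite /K -exprMn ler_pM2r ?invr_gt0.
  have pz := p0 z.
  apply: (@le_trans _ _ (p z * (1 + s * Y z + (s * Y z) ^+ 2 / (1 - s * c)))).
    by apply: ler_wpM2l => //; exact: ltW.
  nra.
rewrite !big_split /= -mulr_sumr Y0 mulr0 addr0 -mulr_suml p1 mul1r.
exact: expR_ge1Dx.
Qed.

Lemma sub_sum (E : pred {ffun 'I_n -> T}) (F : {ffun 'I_n -> T} -> R) :
  (forall w, 0 <= F w) -> \sum_(w | E w) F w <= \sum_w F w.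
Proof.
move=> F0; rewrite [X in _ <= X](bigID E) /= lerDl.
by apply: sumr_ge0 => w _; exact: F0.
Qed.

Lemma pw_ge0 (w : {ffun 'I_n -> T}) : 0 <= \prod_i p (w i).
Proof. by apply: prodr_ge0 => i _; exact: ltW. Qed.

Lemma conc (Y : T -> R) (c eps : R) :
  \sum_z p z * Y z = 0 -> (forall z, `|Y z| <= c) -> (0 < n)%N -> 0 < c -> 0 <= eps -> eps <= c ->
  \sum_(w : {ffun 'I_n -> T} | eps < `|n%:R^-1 * \sum_i Y (w i)|) \prod_i p (w i)
  <= expR (- (n%:R / 8) * (eps / c) ^+ 2 + 4^-1).
Proof.
move=> Y0 Yc n0 c0 eps0 epsc.
set E := fun w : {ffun 'I_n -> T} => eps < `|n%:R^-1 * \sum_i Y (w i)|.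
set P := \sum_(w | E w) _.
set r := eps / c.
have r0 : 0 <= r by rewrite /r divr_ge0 // ltW.
have r1 : r <= 1 by rewrite /r ler_pdivrMr // mul1r.
have epsE : eps = r * c by rewrite /r divfK // gt_eqF.
have n0' : 0 < n%:R :> R by rewrite ltr0n.
set u := n%:R * r ^+ 2.
have -> : - (n%:R / 8) * r ^+ 2 + 4^-1 = - u / 8 + 4^-1 by rewrite /u; field.
have P1 : P <= 1 by rewrite -(total); apply: sub_sum; exact: pw_ge0.
have EP : forall w, E w -> n%:R * eps < `|\sum_i Y (w i)|.
  move=> w; rewrite /E normrM ger0_norm ?invr_ge0 ?ler0n // mulrC.
  by rewrite ltr_pdivlMr // mulrC.
case: (lerP u 2) => u2.
  apply: (le_trans P1); apply: (le_trans _ (expR_ge1Dx _)); lra.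
have eps_pos : 0 < eps.
  rewrite lt0r eps0 andbT; apply/eqP => e0.
  move: u2; rewrite /u /r e0 mul0r expr0n /= mulr0; lra.
case: (lerP u 14) => u14.
  apply: (le_trans _ (cheb_num (ltW u2) u14)).
  have H : P * (n%:R * eps) ^+ 2 <= n%:R * c ^+ 2.
    apply: (le_trans _ (second_moment Y0 Yc)).
    rewrite /P mulr_suml.
    apply: (@le_trans _ _ (\sum_(w | E w) \prod_i p (w i) * (\sum_i Y (w i)) ^+ 2)); last first.
      by apply: sub_sum => w; rewrite mulr_ge0 ?pw_ge0 ?sqr_ge0.
    apply: ler_sum => w Ew; apply: ler_wpM2l; first exact: pw_ge0.
    rewrite -[X in _ <= X]real_normK ?num_real // lerXn2r ?nnegrE ?mulr_ge0 ?ler0n //.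
    exact: ltW (EP w Ew).
  have ne : 0 < (n%:R * eps) ^+ 2 by rewrite exprn_gt0 // mulr_gt0.
  apply: (@le_trans _ _ (n%:R * c ^+ 2 / (n%:R * eps) ^+ 2)); first by rewrite ler_pdivlMr.
  rewrite le_eqVlt; apply/orP; left; apply/eqP.
  rewrite /u epsE; field.
  have rp : 0 < r by rewrite /r divr_gt0.
  by rewrite !gt_eqF.
apply: (le_trans _ (chern_num (ltW u14))).
set sg := r / (4 * c).
have rp : 0 < r by rewrite /r divr_gt0.
have sg0 : 0 <= sg by rewrite /sg; apply: divr_ge0; lra.
have sgc : sg * c = r / 4 by rewrite /sg; field; rewrite gt_eqF.
have sgc1 : sg * c < 1 by rewrite sgc; lra.
have Y0' : \sum_z p z * (- Y z) = 0.
  rewrite (eq_bigr (fun z => - (p z * Y z))); last by move=> z _; rewrite mulrN.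
  by rewrite sumrN Y0 oppr0.
have Yc' : forall z, `|- Y z| <= c by move=> z; rewrite normrN.
have Hm1 := mgf Y0 Yc sg0 sgc1.
have Hm2 := mgf Y0' Yc' sg0 sgc1.
set K := sg ^+ 2 * c ^+ 2 / (1 - sg * c) in Hm1 Hm2.
set e := expR (- (sg * (n%:R * eps))).
have Ind : forall w, E w -> 1 <= expR (sg * \sum_i Y (w i)) * e + expR (sg * \sum_i - Y (w i)) * e.
  move=> w /EP; rewrite ltr_normr /e -!expRD => /orP[] H.
    have h2 := expR_ge0 (sg * \sum_i - Y (w i) + - (sg * (n%:R * eps))).
    have h1 : 1 <= expR (sg * \sum_i Y (w i) + - (sg * (n%:R * eps))).
      apply: (le_trans _ (expR_ge1Dx _)); rewrite lerDl subr_ge0.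
      by rewrite ler_wpM2l // ltW.
    lra.
  have h2 := expR_ge0 (sg * \sum_i Y (w i) + - (sg * (n%:R * eps))).
  have h1 : 1 <= expR (sg * \sum_i - Y (w i) + - (sg * (n%:R * eps))).
    apply: (le_trans _ (expR_ge1Dx _)); rewrite lerDl subr_ge0 sumrN.
    by rewrite ler_wpM2l // ltW.
  lra.
apply: (@le_trans _ _ (\sum_(w | E w) \prod_i p (w i) *
     (expR (sg * \sum_i Y (w i)) * e + expR (sg * \sum_i - Y (w i)) * e))).
  rewrite /P; apply: ler_sum => w Ew.
  by rewrite -[X in X <= _]mulr1; apply: ler_wpM2l; [exact: pw_ge0 | exact: Ind].
apply: (le_trans (sub_sum _ _)).
  by move=> w; rewrite mulr_ge0 ?pw_ge0 ?addr_ge0 ?mulr_ge0 ?expR_ge0.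
under eq_bigr do rewrite mulrDr !mulrA.
rewrite big_split /= -!mulr_suml.
apply: (@le_trans _ _ ((expR K ^+ n + expR K ^+ n) * e)).
  rewrite -mulrDl ler_wpM2r ?expR_ge0 //; exact: lerD.
have -> : (expR K ^+ n + expR K ^+ n) * e = 2 * (expR K ^+ n * e) by ring.
apply: ler_wpM2l => //.
rewrite /e -expRM_natl -expRD ler_expR.
have Kle : K <= r ^+ 2 / 12.
  rewrite /K -exprMn sgc ler_pdivrMr; last by lra.
  have -> : (r / 4) ^+ 2 = r ^+ 2 / 16 by field.
  nra.
have -> : sg * (n%:R * eps) = u / 4 by rewrite /u /sg epsE; field; rewrite gt_eqF.
have : n%:R * K <= u / 12 by rewrite /u -mulrA; apply: ler_wpM2l; [exact: ler0n | lra].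
lra.
Qed.
End Conc.
Section CS.
Variable R : realType.
Lemma CS_sq m (a b : 'I_m -> R) :
  (\sum_k a k * b k) ^+ 2 <= (\sum_k a k ^+ 2) * (\sum_k b k ^+ 2).
Proof.
set A := \sum_k a k ^+ 2; set B := \sum_k b k ^+ 2; set Cc := \sum_k a k * b k.
have A0 : 0 <= A by apply: sumr_ge0 => k _; exact: sqr_ge0.
have B0 : 0 <= B by apply: sumr_ge0 => k _; exact: sqr_ge0.
have Q : forall t, 0 <= t ^+ 2 * A - 2 * t * Cc + B.
  move=> t.
  have -> : t ^+ 2 * A - 2 * t * Cc + B = \sum_k (t * a k - b k) ^+ 2.
    rewrite /A /B /Cc mulr_sumr mulr_sumr -sumrN -!big_split /=.
    by apply: eq_bigr => k _; ring.
  by apply: sumr_ge0 => k _; exact: sqr_ge0.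
case: (eqVneq A 0) => [A00|Anz].
  have a0 : forall k, a k = 0.
    move=> k; apply/eqP; rewrite -sqrf_eq0 eq_le sqr_ge0 andbT.
    rewrite -A00 /A (bigD1 k) //= lerDl; apply: sumr_ge0 => l _; exact: sqr_ge0.
  rewrite /Cc big1 ?expr0n ?mulr_ge0 //= => k _; by rewrite a0 mul0r.
have Ap : 0 < A by rewrite lt0r Anz.
have := Q (Cc / A).
have -> : (Cc / A) ^+ 2 * A - 2 * (Cc / A) * Cc + B = B - Cc ^+ 2 / A by field.
by rewrite subr_ge0 ler_pdivrMr // mulrC.
Qed.

Lemma CS m (a b : 'I_m -> R) :
  `|\sum_k a k * b k| <= Num.sqrt (\sum_k a k ^+ 2) * Num.sqrt (\sum_k b k ^+ 2).
Proof.
have A0 : 0 <= \sum_k a k ^+ 2 by apply: sumr_ge0 => k _; exact: sqr_ge0.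
rewrite -sqrtrM // -sqrtr_sqr ler_sqrt ?CS_sq //.
by apply: mulr_ge0 => //; apply: sumr_ge0 => k _; exact: sqr_ge0.
Qed.
End CS.

Section Glue.
Variables (R : realType) (d : nat) (p : state d -> R) (G : state d -> R).

Lemma card_state : #|state d| = NS d.
Proof.
rewrite /NS -[#|{set 'I_d}|]cardsT -powersetT card_powerset cardsT card_ffun card_bool !card_ord //.
Qed.

Lemma Gamma_sym : (Gamma p)^T = Gamma p.
Proof.
apply/matrixP => k l; rewrite !mxE; apply: eq_bigr => x _.
by rewrite (mulrC (eA p (subset_of l) x)).
Qed.

Lemma Gamma_unit lam : is_lambda_min (Gamma p) lam -> 0 < lam -> Gamma p \in unitmx.
Proof.
move=> [_ lamP] lam0; apply/negPn/negP => nU.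
have : eigenvalue (Gamma p) 0.
  rewrite /eigenvalue /eigenspace.
  have -> : (0 : R)%:M = 0 :> 'M_(NS d) by apply/matrixP => i j; rewrite !mxE mul0rn.
  by rewrite subr0 kermx_eq0 row_free_unit.
move/lamP; lra.
Qed.

Lemma span_G : Gamma p \in unitmx ->
  exists beta : 'cV[R]_(NS d), forall z, G z = \sum_k beta k 0 * eA p (subset_of k) z.
Proof.
move=> GU.
pose N := #|state d|.
pose E : 'M[R]_(NS d, N) := \matrix_(k, j) eA p (subset_of k) (enum_val j).
pose Dg : 'M[R]_N := diag_mx (\row_j p (enum_val j)).
have GE : Gamma p = E *m Dg *m E^T.
  apply/matrixP => k l; rewrite !mxE.
  under [RHS]eq_bigr do rewrite mul_mx_diag !mxE.
  rewrite (reindex (@enum_rank _)) /=; last by apply: onW_bij; exact: enum_rank_bij.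
  apply: eq_bigr => x _; rewrite enum_rankK; ring.
have rk : \rank E = NS d.
  apply/eqP; rewrite eqn_leq rank_leq_row /=.
  rewrite -{1}(mxrank_unit GU) GE.
  exact: leq_trans (mxrankM_maxl _ _) (mxrankM_maxl _ _).
have Efull : row_full E by rewrite /row_full rk /N card_state.
have := submx_full (\row_j G (enum_val j)) Efull.
case/submxP => Dm HD.
exists Dm^T => z.
have := congr1 (fun M : 'rV_N => M 0 (enum_rank z)) HD.
rewrite !mxE enum_rankK => ->.
by apply: eq_bigr => k _; rewrite !mxE enum_rankK.
Qed.

Lemma mu_beta (beta : 'cV[R]_(NS d)) :
  (forall z, G z = \sum_k beta k 0 * eA p (subset_of k) z) ->
  muvec p G = Gamma p *m beta.
Proof.
move=> HG; apply/matrixP => k i; rewrite !mxE summxE.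
under eq_bigr do rewrite !mxE HG mulr_sumr mulr_sumr.
rewrite exchange_big /=; apply: eq_bigr => l _; rewrite !mxE ord1 mulr_suml.
by apply: eq_bigr => x _; ring.
Qed.
End Glue.

Lemma gsup_ge (R : realType) d (p G : state d -> R) z :
  norm2 (gvec p G z - muvec p G) <= gsup p G.
Proof. by rewrite /gsup (bigD1 z) //= le_max lexx. Qed.

Lemma gsup_ge0 (R : realType) d (p G : state d -> R) : 0 <= gsup p G.
Proof.
rewrite /gsup; elim/big_ind: _ => //.
  by move=> a b ha hb; rewrite le_max ha.
by move=> z _; rewrite /norm2 sqrtr_ge0.
Qed.

Unset Implicit Arguments.
Theorem theorem4 (R : realType) (d n : nat) (p : state d -> R) (G : state d -> R)
    (lam : R) (x : state d) (eps : R) :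
  is_law p -> (0 < n)%N -> is_lambda_min (Gamma p) lam ->
  0 <= eps -> eps <= gsup p G * norm2 (evec p x) / lam ->
  Pn p (fun s : sample d n => eps < `|Ghat p G s x - G x|)
  <= expR (- (n%:R / 8) * (eps * lam / (gsup p G * norm2 (evec p x))) ^+ 2 + 4^-1).
Proof.
move=> pl n0 lmin eps0 epsle.
have [p0 p1] := pl.
set D := gsup p G * norm2 (evec p x) in epsle *.
have D0 : 0 <= D by rewrite /D mulr_ge0 ?gsup_ge0 // /norm2 sqrtr_ge0.
have Ptot : Pn p (fun s : sample d n => eps < `|Ghat p G s x - G x|) <= 1.
  rewrite /Pn -[X in _ <= X](total n p1); apply: sub_sum; exact: pw_ge0.
have triv : eps * lam / D = 0 -> Pn p (fun s : sample d n => eps < `|Ghat p G s x - G x|)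
  <= expR (- (n%:R / 8) * (eps * lam / D) ^+ 2 + 4^-1).
  move=> ->; rewrite expr0n /= mulr0 add0r; apply: (le_trans Ptot).
  apply: (le_trans _ (expR_ge1Dx _)); lra.
case: (lerP lam 0) => lam0.
  case: (eqVneq D 0) => [D00|Dn0]; first by apply: triv; rewrite D00 invr0 mulr0.
  have Dp : 0 < D by rewrite lt0r Dn0.
  case: (eqVneq lam 0) => [l0|ln0]; first by apply: triv; rewrite l0 mulr0 mul0r.
  have lneg : lam < 0 by rewrite lt_neqAle ln0.
  have : D / lam < 0 by rewrite pmulr_rlt0 // invr_lt0.
  lra.
case: (eqVneq D 0) => [D00|Dn0]; first by apply: triv; rewrite D00 invr0 mulr0.
have Dp : 0 < D by rewrite lt0r Dn0.
have GU := Gamma_unit lmin lam0.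
have [beta Hb] := span_G G GU.
have muE := mu_beta Hb.
set M := invmx (Gamma p).
set ex := evec p x.
pose L := fun v : 'cV[R]_(NS d) => \sum_k (M *m v) k 0 * ex k 0.
have LGhat : forall s : sample d n, Ghat p G s x = L (muhat p G s).
  by move=> s; rewrite /Ghat mxE; apply: eq_bigr => k _; rewrite !mxE.
have Ladd : forall u v, L (u + v) = L u + L v.
  by move=> u v; rewrite /L -big_split; apply: eq_bigr => k _; rewrite mulmxDr mxE mulrDl.
have Lsc : forall a v, L (a *: v) = a * L v.
  by move=> a v; rewrite /L mulr_sumr; apply: eq_bigr => k _; rewrite -scalemxAr mxE mulrA.
have Lsub : forall u v, L (u - v) = L u - L v.
  by move=> u v; rewrite Ladd -scaleN1r Lsc mulN1r.
have Lsum : forall (I : finType) (F : I -> 'cV[R]_(NS d)), L (\sum_i F i) = \sum_i L (F i).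
  move=> I F; rewrite /L exchange_big /=; apply: eq_bigr => k _.
  by rewrite mulmx_sumr summxE mulr_suml.
have Lmu : L (muvec p G) = G x.
  rewrite muE /L /M mulKmx // Hb; apply: eq_bigr => k _; by rewrite /ex mxE.
pose Y := fun z => L (gvec p G z) - G x.
have Ymean : \sum_z p z * Y z = 0.
  rewrite /Y; under eq_bigr do rewrite mulrBr -Lsc.
  by rewrite sumrB -Lsum -mulr_suml p1 mul1r -/(muvec p G) Lmu subrr.
have Ybound : forall z, `|Y z| <= D / lam.
  move=> z; rewrite /Y -Lmu -Lsub /L.
  apply: (le_trans (CS _ _)).
  set v := gvec p G z - muvec p G.
  have H1 : Num.sqrt (\sum_k (M *m v) k 0 ^+ 2) <= gsup p G / lam.
    rewrite ler_pdivlMr //.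
    have Hs := spec_bound (Gamma_sym p) (ltW lam0) (proj2 lmin) (M *m v).
    rewrite /M mulKVmx // in Hs.
    apply: (le_trans _ (gsup_ge p G z)).
    rewrite /norm2 -/v -(ger0_norm (ltW lam0)) -sqrtr_sqr -sqrtrM; last first.
      by apply: sumr_ge0 => k _; exact: sqr_ge0.
    by rewrite mulrC ler_sqrt // sumr_ge0 // => k _; exact: sqr_ge0.
  rewrite /D mulrAC; apply: ler_wpM2r; first by rewrite /norm2 sqrtr_ge0.
  exact: H1.
have c0 : 0 < D / lam by rewrite divr_gt0.
have := conc p0 p1 Ymean Ybound n0 c0 eps0 epsle.
have -> : eps / (D / lam) = eps * lam / D by field; rewrite ?gt_eqF.
apply: le_trans; rewrite /Pn le_eqVlt; apply/orP; left; apply/eqP.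
apply: eq_bigl => s; rewrite LGhat /muhat Lsc Lsum /Y.
rewrite sumrB sumr_const card_ord mulrBr.
have -> : n%:R^-1 * (G x *+ n) = G x.
  by rewrite -[G x *+ n]mulr_natl mulKf // pnatr_eq0 -lt0n.
by [].
Qed.
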